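(* Let $m,b\ge1$, let $\mathbf M$ be an invertible $\mathbb{F}_{2^m}$-linear map of $(\mathbb{F}_{2^m})^b$ (i.e. $\mathbf M\in\mathrm{GL}((\mathbb{F}_{2^m})^b)$) of order $t$, regard $V=(\mathbb{F}_{2^m})^b$ as $(\mathbb{F}_2)^{mb}$, and define $\alpha:V\to(\mathbb{F}_2)^{2^m bt}$ by $\alpha(v)=(\varepsilon(v),\varepsilon(\mathbf Mv),\dots,\varepsilon(\mathbf M^{t-1}v))$. Then $\dim_{\mathbb{F}_2}\langle\alpha(V)\rangle\le 2^m bt-(bt-1)-mb(t-1)$.
   Context: Identify $(\mathbb{F}_2)^m$ with $\mathbb{F}_{2^m}=\mathbb{F}_2[x]/(p)$ for a primitive polynomial $p$ of degree $m$, with primitive element $\gamma$ (a root of $p$). Let $e_1,\dots,e_{2^m}$ be the standard basis of $(\mathbb{F}_2)^{2^m}$ and define $\varepsilon':\mathbb{F}_{2^m}\to(\mathbb{F}_2)^{2^m}$ by $\varepsilon'(0)=e_1$, $\varepsilon'(\gamma^i)=e_{i+1}$ for $1\le i\le2^m-1$. For $v=(v_1,\dots,v_b)\in(\mathbb{F}_{2^m})^b$ set $\varepsilon(v)=(\varepsilon'(v_1),\dots,\varepsilon'(v_b))\in(\mathbb{F}_2)^{2^m b}$. $\langle S\rangle$ denotes the $\mathbb{F}_2$-linear span. *)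

(* Defs.v *)
From HB Require Import structures.
From mathcomp Require Import all_boot all_order all_algebra all_field.
Set Implicit Arguments. Unset Strict Implicit. Unset Printing Implicit Defensive.
Import GRing.Theory.
Local Open Scope ring_scope.

(* epsilon' : F -> (F_2)^(2^m), coordinates indexed 0..2^m-1 (0-based).
   eps'(0) = e_1 (index 0), eps'(gamma^i) = e_{i+1} (index i), 1 <= i <= 2^m-1. *)
Definition eps' (F : finFieldType) (m : nat) (gamma : F) (x : F)
  : 'rV['F_2]_(2 ^ m) :=
  \row_(j < 2 ^ m)
    (if j == 0%N :> nat then (x == 0) else (x == gamma ^+ j))%:R.

Definition eps (F : finFieldType) (m b : nat) (gamma : F) (v : 'cV[F]_b)
  : 'rV['F_2]_(b * 2 ^ m) :=
  mxvec (\matrix_(i < b) eps' m gamma (v i 0)).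

Definition alpha (F : finFieldType) (m b t : nat) (gamma : F) (M : 'M[F]_b)
  (v : 'cV[F]_b) : 'rV['F_2]_(t * (b * 2 ^ m)) :=
  mxvec (\matrix_(k < t) eps m gamma (M ^+ k *m v)).

(* Main.v *)
Require Import Defs.
From HB Require Import structures.
From mathcomp Require Import all_boot all_order all_algebra all_field zify.
Import GRing.Theory.
Local Open Scope ring_scope.
Set Implicit Arguments. Unset Strict Implicit.

Lemma F2_cases (c : 'F_2) : c = 0 \/ c = 1.
Proof. case: c => [[|[|n]] Hn]; [left; exact/val_inj|right; exact/val_inj|by []]. Qed.

Definition emb (F : finFieldType) (c : 'F_2) : F := (c : nat)%:R.

Lemma emb0 F : emb F 0 = 0. Proof. by []. Qed.
Lemma emb1 F : emb F 1 = 1. Proof. by rewrite /emb /=. Qed.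

Lemma embD (F : finFieldType) : (2%:R : F) = 0 -> forall a b : 'F_2, emb F (a + b) = emb F a + emb F b.
Proof.
move=> H2 a b; case: (F2_cases a) => ->; case: (F2_cases b) => ->;
  rewrite ?add0r ?addr0 ?emb0 ?add0r ?addr0 //.
Qed.

Lemma char2 (F : finFieldType) m : #|F| = (2 ^ m)%N -> (2%:R : F) = 0.
Proof. move=> HF; apply: pcharf0; exact: (card_finPcharP HF). Qed.
Lemma eps'_onehot (F : finFieldType) m (gamma x : F) : (0 < m)%N ->
  (2 ^ m).-1.-primitive_root gamma -> #|F| = (2 ^ m)%N ->
  exists j0 : 'I_(2 ^ m), (forall j, eps' m gamma x 0 j = (j == j0)%:R) /\
     (j0 != 0%N :> nat -> gamma ^+ j0 = x) /\ (j0 == 0%N :> nat -> x = 0).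
Proof.
move=> m0 prim HF.
have n1 : (1 <= (2 ^ m).-1)%N.
  have : (2 ^ 1 <= 2 ^ m)%N by rewrite leq_exp2l.
  rewrite expn1; lia.
have g0 : forall j, gamma ^+ j != 0.
  move=> j; rewrite expf_eq0 negb_and; apply/orP; right; apply/eqP=> g0.
  have := prim_expr_order prim; rewrite g0 expr0n; case: ((2 ^ m).-1) n1 => //= k _.
  by move/eqP; rewrite eq_sym oner_eq0.
have Hmod : forall i j : nat, (0 < i <= (2 ^ m).-1)%N -> (0 < j <= (2 ^ m).-1)%N ->
    (gamma ^+ i == gamma ^+ j) = (i == j).
  move=> i j Hi Hj; rewrite (eq_prim_root_expr prim).
  apply/idP/idP => [/eqP H|/eqP -> //].
  have km : forall k, (0 < k <= (2 ^ m).-1)%N -> (k %% (2 ^ m).-1 = if k == (2 ^ m).-1 then 0 else k)%N.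
    move=> k Hk; case: eqP => [->|kn]; first by rewrite modnn.
    rewrite modn_small //; lia.
  move: H; rewrite (km i Hi) (km j Hj).
  case: eqP => ?; case: eqP => ? H; lia.
have ltn : ((2 ^ m).-1 < 2 ^ m)%N by rewrite prednK ?expn_gt0.
have [->|x0] := eqVneq x 0.
  exists (Ordinal (expn_gt0 2 m)); split; last by split.
  move=> j; rewrite mxE; case: eqP => [Hj|Hj].
    have -> : j = Ordinal (expn_gt0 2 m) by exact: ord_inj.
    by rewrite !eqxx.
  rewrite eq_sym (negbTE (g0 _)); case: eqP => // E.
  by case: Hj; rewrite E.
have xn : x ^+ (2 ^ m).-1 = 1.
  have := expf_card x; rewrite HF -{1}(prednK (expn_gt0 2 m)) exprS.
  move=> E; apply: (mulfI x0); rewrite E mulr1 //.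
have [i Hi] := prim_rootP prim xn.
have iN := ltn_ord i.
pose j0 : nat := if i == 0%N :> nat then (2 ^ m).-1 else i.
have j0lt : (j0 < 2 ^ m)%N by rewrite /j0; case: ifP => _ //; lia.
have j0pos : (0 < j0 <= (2 ^ m).-1)%N by rewrite /j0; case: ifP => /eqP; lia.
have xj0 : x = gamma ^+ j0.
  rewrite Hi /j0; case: ifP => // /eqP ->; by rewrite expr0 prim_expr_order.
exists (Ordinal j0lt); split; last first.
  split; first by move=> _ /=; rewrite xj0.
  by move=> /= /eqP E; move: j0pos; rewrite E.
move=> j; rewrite mxE /=; case: eqP => [Hj|Hj].
  rewrite (negbTE x0); case: eqP => // /(congr1 val) /= E.
  by move: j0pos; rewrite -E Hj.
rewrite xj0 Hmod //; last by move: (ltn_ord j); lia.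
by rewrite eq_sym -(inj_eq val_inj). Qed.

Definition blk (n b t : nat) (w : 'rV['F_2]_(t * (b * n))) (k : 'I_t) (i : 'I_b) (j : 'I_n) : 'F_2 :=
  vec_mx (row k (vec_mx w)) i j.

Lemma blkD n b t (w1 w2 : 'rV['F_2]_(t * (b * n))) k i j :
  blk (w1 + w2) k i j = blk w1 k i j + blk w2 k i j.
Proof. by rewrite /blk !mxE. Qed.

Lemma blk_mk n b t (B : 'I_t -> 'I_b -> 'rV['F_2]_n) k i j :
  blk (mxvec (\matrix_(k < t) mxvec (\matrix_(i < b) B k i))) k i j = B k i 0 j.
Proof. by rewrite /blk mxvecK rowK mxvecK mxE. Qed.

Definition blocksum n b t (w : 'rV['F_2]_(t * (b * n))) k i : 'F_2 := \sum_j blk w k i j.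

Lemma blocksumD n b t (w1 w2 : 'rV['F_2]_(t * (b * n))) k i :
  blocksum (w1 + w2) k i = blocksum w1 k i + blocksum w2 k i.
Proof. by rewrite /blocksum -big_split; apply: eq_bigr => j _; rewrite blkD. Qed.

Definition dec (F : finFieldType) (gamma : F) n b t (w : 'rV['F_2]_(t * (b * n))) k i : F :=
  \sum_(j < n | j != 0%N :> nat) emb F (blk w k i j) * gamma ^+ j.

Lemma decD (F : finFieldType) (gamma : F) n b t (w1 w2 : 'rV['F_2]_(t * (b * n))) k i :
  (2%:R : F) = 0 -> dec gamma (w1 + w2) k i = dec gamma w1 k i + dec gamma w2 k i.
Proof.
move=> H2; rewrite /dec -big_split; apply: eq_bigr => j _.
by rewrite blkD embD // mulrDl.
Qed.

Definition dec0 (F : finFieldType) (gamma : F) n b t (w : 'rV['F_2]_(t * (b * n))) k0 : 'cV[F]_b :=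
  \col_i dec gamma w k0 i.

Lemma eps'_sum (F : finFieldType) m (gamma x : F) : (0 < m)%N ->
  (2 ^ m).-1.-primitive_root gamma -> #|F| = (2 ^ m)%N ->
  \sum_j eps' m gamma x 0 j = 1.
Proof.
move=> m0 prim HF; have [j0 [Hj _]] := eps'_onehot x m0 prim HF.
rewrite (bigD1 j0) //= big1 ?addr0 ?Hj ?eqxx //.
by move=> j /negbTE nj; rewrite Hj nj.
Qed.

Lemma blk_eps'_dec (F : finFieldType) m (gamma : F) b t (w : 'rV['F_2]_(t * (b * 2 ^ m))) k i x :
  (0 < m)%N -> (2 ^ m).-1.-primitive_root gamma -> #|F| = (2 ^ m)%N ->
  (forall j, blk w k i j = eps' m gamma x 0 j) -> dec gamma w k i = x.
Proof.
move=> m0 prim HF Hb; have [j0 [Hj [H1 H2]]] := eps'_onehot x m0 prim HF.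
rewrite /dec; under eq_bigr => j _ do rewrite Hb Hj.
case: (eqVneq (j0 : nat) 0%N) => E.
  rewrite big1 ?H2 ?E //; move=> j nj; suff /negbTE -> : j != j0 by rewrite mulr0n emb0 mul0r.
  by apply: contra nj => /eqP ->; rewrite E.
rewrite (bigD1 j0) //= big1 ?addr0 ?eqxx ?emb1 ?mul1r ?H1 //.
by move=> j /andP [_ /negbTE nj]; rewrite nj emb0 mul0r.
Qed.

Lemma blk_alpha (F : finFieldType) m b t (gamma : F) (M : 'M[F]_b) v k i j :
  blk (alpha m t gamma M v) k i j = eps' m gamma ((M ^+ k *m v) i 0) 0 j.
Proof. exact: (blk_mk (fun k i => eps' m gamma ((M ^+ k *m v) i 0))). Qed.

Definition Pg (F : finFieldType) (gamma : F) m b t (M : 'M[F]_b)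
   (w : 'rV['F_2]_(t.+1 * (b * 2 ^ m))) (i0 : 'I_b) :=
  forall k i, blocksum w k i = blocksum w ord0 i0 /\
              dec gamma w k i = (M ^+ k *m dec0 gamma w ord0) i 0.

Lemma Pg0 (F : finFieldType) (gamma : F) m b t (M : 'M[F]_b) i0 : Pg gamma M (0 : 'rV['F_2]_(t.+1 * (b * 2 ^ m))) i0.
Proof.
have d0 : forall k i, dec gamma (0 : 'rV['F_2]_(t.+1 * (b * 2 ^ m))) k i = 0.
  by move=> k i; rewrite /dec big1 // => j _; rewrite /blk !mxE emb0 mul0r.
have s0 : forall k i, blocksum (0 : 'rV['F_2]_(t.+1 * (b * 2 ^ m))) k i = 0.
  by move=> k i; rewrite /blocksum big1 // => j _; rewrite /blk !mxE.
move=> k i; rewrite !s0 d0; split=> //.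
have -> : dec0 gamma (0 : 'rV['F_2]_(t.+1 * (b * 2 ^ m))) ord0 = 0.
  by apply/matrixP => x y; rewrite !mxE d0.
by rewrite mulmx0 mxE.
Qed.

Lemma PgD (F : finFieldType) (gamma : F) m b t (M : 'M[F]_b) i0 (w1 w2 : 'rV['F_2]_(t.+1 * (b * 2 ^ m))) :
  (2%:R : F) = 0 -> Pg gamma M w1 i0 -> Pg gamma M w2 i0 -> Pg gamma M (w1 + w2) i0.
Proof.
move=> H2 P1 P2 k i; have [a1 b1] := P1 k i; have [a2 b2] := P2 k i.
rewrite !blocksumD a1 a2 !decD // b1 b2; split=> //.
have -> : dec0 gamma (w1 + w2) ord0 = dec0 gamma w1 ord0 + dec0 gamma w2 ord0.
  by apply/matrixP => x y; rewrite !mxE decD.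
by rewrite mulmxDr [RHS]mxE. Qed.

Lemma PgZ (F : finFieldType) (gamma : F) m b t (M : 'M[F]_b) i0 (w : 'rV['F_2]_(t.+1 * (b * 2 ^ m))) (c : 'F_2) :
  Pg gamma M w i0 -> Pg gamma M (c *: w) i0.
Proof. by case: (F2_cases c) => ->; rewrite ?scale0r ?scale1r // => _; apply: Pg0. Qed.

Lemma Pg_alpha (F : finFieldType) m b t (gamma : F) (M : 'M[F]_b) v i0 :
  (0 < m)%N -> (2 ^ m).-1.-primitive_root gamma -> #|F| = (2 ^ m)%N ->
  Pg gamma M (alpha m t.+1 gamma M v) i0.
Proof.
move=> m0 prim HF k i.
have S : forall k i, blocksum (alpha m t.+1 gamma M v) k i = 1.
  by move=> k' i'; rewrite /blocksum (eq_bigr _ (fun j _ => blk_alpha _ _ _ _ _ _)) eps'_sum.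
have D : forall k i, dec gamma (alpha m t.+1 gamma M v) k i = (M ^+ k *m v) i 0.
  by move=> k' i'; apply: blk_eps'_dec => // j; rewrite blk_alpha.
rewrite !S D; split=> //.
have -> : dec0 gamma (alpha m t.+1 gamma M v) ord0 = v.
  by apply/matrixP => x y; rewrite !mxE D /= expr0 mul1mx; case: y => [[|]] // ?; congr (v x _); apply: ord_inj.
by [].
Qed.

Lemma Pg_span (F : finFieldType) m b t (gamma : F) (M : 'M[F]_b) i0
  (u : 'rV['F_2]_(t.+1 * (b * 2 ^ m))) :
  (0 < m)%N -> (2 ^ m).-1.-primitive_root gamma -> #|F| = (2 ^ m)%N ->
  u \in <<[seq alpha m t.+1 gamma M v | v : 'cV[F]_b]>>%VS -> Pg gamma M u i0.
Proof.
move=> m0 prim HF Hu.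
have H2 := char2 HF.
set S := [seq alpha m t.+1 gamma M v | v : 'cV[F]_b] in Hu.
rewrite (@coord_span _ _ _ (in_tuple S) u Hu).
apply: (big_ind (fun w => Pg gamma M w i0)); first exact: Pg0.
  by move=> x y; apply: PgD.
move=> i _; apply: PgZ.
have : S`_i \in S by apply: mem_nth; exact: ltn_ord.
by case/mapP => v _ ->; apply: Pg_alpha.
Qed.

Definition decr (F : finFieldType) (gamma : F) n (r : 'rV['F_2]_n) : F :=
  \sum_(j < n | j != 0%N :> nat) emb F (r 0 j) * gamma ^+ j.

Lemma dec_decr (F : finFieldType) (gamma : F) n b t (w : 'rV['F_2]_(t * (b * n))) k i (r : 'rV['F_2]_n) :
  (forall j, blk w k i j = r 0 j) -> dec gamma w k i = decr gamma r.
Proof. by move=> H; rewrite /dec /decr; apply: eq_bigr => j _; rewrite H. Qed.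

Lemma blocksum_r n b t (w : 'rV['F_2]_(t * (b * n))) k i (r : 'rV['F_2]_n) :
  (forall j, blk w k i j = r 0 j) -> blocksum w k i = \sum_j r 0 j.
Proof. by move=> H; rewrite /blocksum; apply: eq_bigr => j _; rewrite H. Qed.

Lemma decrD (F : finFieldType) (gamma : F) n (r1 r2 : 'rV['F_2]_n) :
  (2%:R : F) = 0 -> decr gamma (r1 + r2) = decr gamma r1 + decr gamma r2.
Proof.
move=> H2; rewrite /decr -big_split; apply: eq_bigr => j _.
by rewrite mxE embD // mulrDl.
Qed.

Definition e0 n : 'rV['F_2]_n := \row_j ((j : nat) == 0%N)%:R.

Lemma decr_e0 (F : finFieldType) (gamma : F) n (c : 'F_2) : decr gamma (c *: e0 n) = 0.
Proof.
rewrite /decr big1 // => j /negbTE nj; rewrite !mxE nj mulr0 emb0 mul0r //.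
Qed.

Lemma sum_e0 n (c : 'F_2) : (0 < n)%N -> \sum_j (c *: e0 n) 0 j = c.
Proof.
move=> n0; rewrite (bigD1 (Ordinal n0)) //= big1 ?addr0 ?mxE ?mulr1 //.
move=> j nj; rewrite !mxE; case: eqP => [E|]; last by rewrite mulr0.
by case/eqP: nj; apply: ord_inj.
Qed.

Lemma decr_eps' (F : finFieldType) m (gamma x : F) : (0 < m)%N ->
  (2 ^ m).-1.-primitive_root gamma -> #|F| = (2 ^ m)%N ->
  decr gamma (eps' m gamma x) = x.
Proof.
move=> m0 prim HF.
pose w := mxvec (\matrix_(k < 1) mxvec (\matrix_(i < 1) eps' m gamma x)).
rewrite -(@dec_decr _ gamma _ 1 1 w ord0 ord0); last first.
  by move=> j; rewrite /w blk_mk.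
by apply: blk_eps'_dec => // j; rewrite /w blk_mk.
Qed.

Definition sblk (F : finFieldType) m (gamma : F) b t
  (h : {ffun 'I_t * 'I_b.+1 -> 'F_2 * F}) (q : {ffun 'I_b -> 'F_2})
  (k : 'I_t.+1) (i : 'I_b.+1) : 'rV['F_2]_(2 ^ m) :=
  match unlift ord0 k with
  | Some k' => eps' m gamma (h (k', i)).2 + ((h (k', i)).1 + 1) *: e0 (2 ^ m)
  | None => match unlift ord0 i with Some i' => q i' *: e0 (2 ^ m) | None => 0 end
  end.

Definition sv (F : finFieldType) m (gamma : F) b t
  (h : {ffun 'I_t * 'I_b.+1 -> 'F_2 * F}) (q : {ffun 'I_b -> 'F_2})
  : 'rV['F_2]_(t.+1 * (b.+1 * 2 ^ m)) :=
  mxvec (\matrix_(k < t.+1) mxvec (\matrix_(i < b.+1) sblk m gamma h q k i)).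

Definition recH (F : finFieldType) m (gamma : F) b t (M : 'M[F]_b.+1)
  (w : 'rV['F_2]_(t.+1 * (b.+1 * 2 ^ m))) : {ffun 'I_t * 'I_b.+1 -> 'F_2 * F} :=
  [ffun p => (blocksum w (lift ord0 p.1) p.2 - blocksum w ord0 ord0,
              dec gamma w (lift ord0 p.1) p.2 - (M ^+ (lift ord0 p.1) *m dec0 gamma w ord0) p.2 0)].

Definition recQ m b t (w : 'rV['F_2]_(t.+1 * (b.+1 * 2 ^ m))) : {ffun 'I_b -> 'F_2} :=
  [ffun i' => blocksum w ord0 (lift ord0 i') - blocksum w ord0 ord0].

Lemma rec_correct (F : finFieldType) m (gamma : F) b t (M : 'M[F]_b.+1)
  (u : 'rV['F_2]_(t.+1 * (b.+1 * 2 ^ m))) h q :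
  (0 < m)%N -> (2 ^ m).-1.-primitive_root gamma -> #|F| = (2 ^ m)%N ->
  Pg gamma M u ord0 ->
  recH gamma M (u + sv m gamma h q) = h /\ recQ (u + sv m gamma h q) = q.
Proof.
move=> m0 prim HF Pu; have H2 := char2 HF.
have n0 : (0 < 2 ^ m)%N by rewrite expn_gt0.
have bs_lift : forall k' i, blocksum (sv m gamma h q) (lift ord0 k') i = (h (k', i)).1.
  move=> k' i; rewrite (blocksum_r (r := sblk m gamma h q (lift ord0 k') i)); last first.
    by move=> j; rewrite /sv blk_mk.
  rewrite /sblk liftK.
  under eq_bigr => j _ do rewrite mxE.
  rewrite big_split /= eps'_sum // sum_e0 //.
  have o : (1 + 1 : 'F_2) = 0 by apply: val_inj.
  by rewrite addrCA o addr0.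
have bs_0 : forall i', blocksum (sv m gamma h q) ord0 (lift ord0 i') = q i'.
  move=> i'; rewrite (blocksum_r (r := sblk m gamma h q ord0 (lift ord0 i'))); last first.
    by move=> j; rewrite /sv blk_mk.
  by rewrite /sblk unlift_none liftK sum_e0.
have bs_00 : blocksum (sv m gamma h q) ord0 ord0 = 0.
  rewrite (blocksum_r (r := sblk m gamma h q ord0 ord0)); last first.
    by move=> j; rewrite /sv blk_mk.
  by rewrite /sblk !unlift_none big1 // => j _; rewrite mxE.
have dec_lift : forall k' i, dec gamma (sv m gamma h q) (lift ord0 k') i = (h (k', i)).2.
  move=> k' i; rewrite (@dec_decr _ gamma _ _ _ _ _ _ (sblk m gamma h q (lift ord0 k') i)); last first.
    by move=> j; rewrite /sv blk_mk.
  by rewrite /sblk liftK decrD // decr_e0 addr0 decr_eps'.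
have dec00 : dec0 gamma (sv m gamma h q) ord0 = 0.
  apply/matrixP => i y; rewrite !mxE.
  rewrite (@dec_decr _ gamma _ _ _ _ _ _ (sblk m gamma h q ord0 i)); last first.
    by move=> j; rewrite /sv blk_mk.
  rewrite /sblk unlift_none; case: (unlift ord0 i) => [i'|]; first exact: decr_e0.
  by rewrite -(scale0r (e0 (2 ^ m))) decr_e0.
split.
  apply/ffunP => [[k' i]]; rewrite ffunE /=.
  have [Pa Pb] := Pu (lift ord0 k') i.
  rewrite !blocksumD !decD // bs_lift bs_00 Pa dec_lift Pb.
  have -> : dec0 gamma (u + sv m gamma h q) ord0 = dec0 gamma u ord0.
    apply/matrixP => x y; rewrite !mxE decD //.
    by move/matrixP: dec00 => /(_ x y); rewrite !mxE => ->; rewrite addr0.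
  case: (h (k', i)) => p y /=.
  by congr (_, _); rewrite ?addr0 addrAC subrr add0r.
apply/ffunP => i'; rewrite ffunE.
have [Pa _] := Pu ord0 (lift ord0 i').
by rewrite !blocksumD Pa bs_0 bs_00 addr0 addrAC subrr add0r.
Qed.

Theorem mainTheorem9 (m b t : nat) (F : finFieldType) (gamma : F) (M : 'M[F]_b) :
  (1 <= m)%N -> (1 <= b)%N ->
  #|F| = (2 ^ m)%N ->
  (2 ^ m).-1.-primitive_root gamma ->
  M \in unitmx ->
  (0 < t)%N -> M ^+ t = 1%:M ->
  (forall k : nat, (0 < k < t)%N -> M ^+ k != 1%:M) ->
  (\dim <<[seq alpha m t gamma M v | v : 'cV[F]_b]>>%VS
     <= 2 ^ m * b * t - (b * t - 1) - m * b * (t - 1))%N.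
Proof.
move=> m0 b1 HF prim _ t0 _ _.
case: t t0 => [//|t] _; case: b M b1 => [//|b] M _.
set U := <<_>>%VS.
pose D := setX (setX [set u in U] [set: {ffun 'I_t * 'I_b.+1 -> 'F_2 * F}])
               [set: {ffun 'I_b -> 'F_2}].
pose phi (x : 'rV['F_2]_(t.+1 * (b.+1 * 2 ^ m)) * {ffun 'I_t * 'I_b.+1 -> 'F_2 * F}
              * {ffun 'I_b -> 'F_2}) := x.1.1 + sv m gamma x.1.2 x.2.
have inj : {in D &, injective phi}.
  move=> [[u1 h1] q1] [[u2 h2] q2]; rewrite !inE /= !andbT => U1 U2 E.
  have P1 := Pg_span ord0 m0 prim HF U1.
  have P2 := Pg_span ord0 m0 prim HF U2.
  have [r1 r2] := rec_correct h1 q1 m0 prim HF P1.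
  have [r1' r2'] := rec_correct h2 q2 m0 prim HF P2.
  rewrite /phi /= in E.
  have eh : h1 = h2 by rewrite -r1 -r1' E.
  have eq : q1 = q2 by rewrite -r2 -r2' E.
  subst h2 q2; congr (_, _, _); exact: (addIr _ E).
have := @leq_card_in _ _ phi D inj.
rewrite !cardsX !cardsT cardsE card_vspace card_mx !card_ffun !card_prod !card_Fp //.
rewrite HF !card_ord mul1n -expnS -expnM -!expnD leq_exp2l //.
set d := \dim _; clearbody d; clear inj phi D U.
move=> H.
have e1 : (t.+1 * (b.+1 * 2 ^ m) = 2 ^ m * b.+1 * t.+1)%N by rewrite mulnC [(b.+1 * _)%N]mulnC.
have e2 : (m.+1 * (t * b.+1) = m * b.+1 * (t.+1 - 1) + t * b.+1)%N.
  rewrite subn1 /= mulSn; nia.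
have e3 : (b.+1 * t.+1 - 1 = t * b.+1 + b)%N.
  by rewrite mulnS mulSn; lia.
rewrite e1 e2 in H; rewrite e3.
move: H; generalize (2 ^ m * b.+1 * t.+1)%N (m * b.+1 * (t.+1 - 1))%N (t * b.+1)%N => A B C.
lia.
Qed.
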